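(* Let $w$ be a word of length $k$ with $s \ne k-1$. Then either $b_{t(k-s)} = 0$ for every integer $1 \le t \le \lfloor k/(k-s) \rfloor$, or $b_{t(k-s)-1} = 0$ for every integer $1 \le t \le \lfloor (k+1)/(k-s) \rfloor$.
   Context: A word of length $k$ is written $w = w_k\dots w_1$. Autocorrelation digits: for $1 \le i \le k$, $b_i = 1$ if $w_j = w_{k-i+j}$ for all $j=1,\dots,i$, else $b_i = 0$ (so $b_k = 1$); convention $b_0=1$. $s = \max\{j \in\{1,\dots,k-1\}: b_j=1\}$, or $s=0$ if no such $j$. *)

(* Defs.v *)
From mathcomp Require Import all_boot.
Set Implicit Arguments. Unset Strict Implicit. Unset Printing Implicit Defensive.

(* A word of length k over an alphabet T is w = w_k ... w_1, modelled as a
   function w : nat -> T of which only the values w 1, ..., w k matter. *)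

Definition acdigit (T : eqType) (w : nat -> T) (k i : nat) : bool :=
  if i == 0 then true
  else [forall j : 'I_i, w j.+1 == w (k - i + j.+1)].

Definition sborder (T : eqType) (w : nat -> T) (k : nat) : nat :=
  \max_(1 <= j < k | acdigit w k j) j.

(* Main.v *)
Require Import Defs.
From mathcomp Require Import all_boot.
From mathcomp Require Import zify.
Set Implicit Arguments. Unset Strict Implicit.

Section S.
Variables (T : eqType) (w : nat -> T) (k : nat).

Definition per q := forall j, 0 < j -> j + q <= k -> w j = w (j + q).

Lemma acdigit_per i : 0 < i <= k -> acdigit w k i -> per (k - i).
Proof.
case: i => [|i] // /andP[_ hi]; rewrite /acdigit /= => /forallP H j j0 jle.
have jlt : j.-1 < i.+1 by lia.
have := H (Ordinal jlt); rewrite /= prednK // => /eqP ->.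
by rewrite addnC.
Qed.

Lemma per_acdigit i : 0 < i <= k -> per (k - i) -> acdigit w k i.
Proof.
case: i => [|i] // /andP[_ hi] H; rewrite /acdigit /=.
apply/forallP => j; apply/eqP; rewrite addnC; apply: H => //.
have := ltn_ord j; lia.
Qed.

Lemma per_sub p q : per p -> per q -> p < q -> p + q <= k -> per (q - p).
Proof.
move=> Hp Hq lpq hk j j0 jle.
case: (leqP (j + q) k) => h.
  rewrite (Hq j j0 h).
  have -> : j + q = (j + (q - p)) + p by lia.
  rewrite -Hp //; lia.
have e : j = j - p + p by lia.
rewrite {1}e -Hp; try lia.
rewrite Hq; try lia.
by congr (w _); lia.
Qed.

Lemma per_mul p : per p -> forall a j, 0 < j -> j + a * p <= k -> w (j + a * p) = w j.
Proof.
move=> Hp; elim=> [|a IH] j j0 hj; first by rewrite mul0n addn0.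
have -> : j + a.+1 * p = (j + a * p) + p by rewrite mulSn; lia.
rewrite -Hp; try lia.
apply: IH => //; rewrite mulSn in hj; lia.
Qed.

End S.

Lemma dvd_sub_aux p a t : t * p <= a -> p %| a - t * p -> p %| a.
Proof.
move=> h1 h2; rewrite -(subnK h1) dvdn_add //; exact: dvdn_mull.
Qed.

Lemma sborder_spec (T : eqType) (w : nat -> T) (k : nat) :
  0 < k -> sborder w k < k /\
  (sborder w k = 0 \/ (0 < sborder w k /\ acdigit w k (sborder w k))).
Proof.
move=> hk; rewrite /sborder big_seq_cond.
elim/big_ind: _.
- by split => //; left.
- move=> x y [hx1 hx2] [hy1 hy2]; split; first by rewrite gtn_max hx1.
  by rewrite /maxn; case: ifP.
- move=> i /andP[]; rewrite mem_index_iota => /andP[h1 h2] hd.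
  by split => //; right.
Qed.

Lemma sborder_max (T : eqType) (w : nat -> T) (k j : nat) :
  0 < j < k -> acdigit w k j -> j <= sborder w k.
Proof.
move=> hj hd; rewrite /sborder; apply: leq_bigmax_seq => //.
by rewrite mem_index_iota.
Qed.

Theorem proposition4p2 (T : eqType) (w : nat -> T) (k : nat) (hk : 0 < k)
    (hs : sborder w k <> k - 1) :
  (forall t : nat, 1 <= t <= k %/ (k - sborder w k) ->
     acdigit w k (t * (k - sborder w k)) = false)
  \/
  (forall t : nat, 1 <= t <= k.+1 %/ (k - sborder w k) ->
     acdigit w k (t * (k - sborder w k) - 1) = false).
Proof.
have [hsk hs2] := sborder_spec w hk.
set s := sborder w k in hs hsk hs2 *.
set p := k - s.
have p2 : 2 <= p by rewrite /p; lia.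
have Pp : per w k p.
  case: hs2 => [s0|[s0 hd]].
    by move=> j j0 jle; rewrite /p s0 in jle; lia.
  by apply: acdigit_per => //; lia.
have Hmin : forall q, 0 < q < k -> per w k q -> p <= q.
  move=> q hq Pq.
  have : k - q <= s.
    apply: sborder_max; first lia.
    apply: per_acdigit; first lia.
    by have -> : k - (k - q) = q by lia.
  rewrite /p; lia.
have Hdiv : forall q, 0 < q -> per w k q -> p + q <= k -> p %| q.
  elim/ltn_ind => q IH q0 Pq hq.
  have : p <= q by apply: Hmin => //; lia.
  rewrite leq_eqVlt => /orP[/eqP <-|lpq]; first exact: dvdnn.
  have h := IH (q - p) ltac:(lia) ltac:(lia) (per_sub Pp Pq lpq hq) ltac:(lia).
  by rewrite -(subnK (ltnW lpq)) dvdn_add.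
have p0 : 0 < p by lia.
case: (boolP (p %| k)) => pk; [right|left] => t /andP[t1]; rewrite leq_divRL // => htp.
- apply/negP => hd.
  have htk : t * p <= k.
    rewrite leq_eqVlt in htp; case/orP: htp => [/eqP e|]; last by [].
    have : p %| k.+1 by rewrite -e; apply: dvdn_mull.
    rewrite -addn1 dvdn_addr // dvdn1 => /eqP; lia.
  have tpp : p <= t * p by rewrite leq_pmull.
  have Pq := acdigit_per _ hd; have {Pq}Pq := Pq ltac:(lia).
  case: (leqP 2 t) => t2.
    have t2p : 2 * p <= t * p by rewrite leq_mul2r t2 orbT.
    have := @Hdiv (k - (t * p - 1)) ltac:(lia) Pq; move=> H; have := H ltac:(lia); clear H.
    have -> : k - (t * p - 1) = k.+1 - t * p by lia.
    move=> /(dvd_sub_aux htp).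
    rewrite -addn1 dvdn_addr // dvdn1 => /eqP; lia.
  have t1' : t = 1 by lia.
  rewrite t1' mul1n in Pq.
  set m := k %/ p.
  have km : k = m * p by rewrite /m divnK.
  have Hstep : forall i, 0 < i < p -> w i = w i.+1.
    move=> i hi.
    rewrite (Pq i); try lia.
    have e2 : m.-1 * p = k - p by rewrite km -subn1 mulnBl mul1n.
    have -> : i + (k - (p - 1)) = i.+1 + m.-1 * p by lia.
    rewrite (per_mul Pp) //; lia.
  have Hall1 : forall i, 0 < i <= p -> w i = w 1.
    elim => [|i IH] // hi.
    case: (posnP i) => [->//|i0].
    by rewrite -Hstep ?IH //; lia.
  have Hall : forall j, 0 < j <= k -> w j = w 1.
    move=> j hj.
    have e := divn_eq j.-1 p.
    have hr : (j.-1 %% p) < p by rewrite ltn_mod.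
    have -> : j = (j.-1 %% p).+1 + (j.-1 %/ p) * p by lia.
    rewrite (per_mul Pp); try lia.
    by apply: Hall1; lia.
  have P1 : per w k 1.
    by move=> j j0 jle; rewrite Hall ?(Hall (j + 1)) //; lia.
  have := Hmin 1 ltac:(lia) P1; lia.
- apply/negP => hd.
  have htk : t * p < k.
    rewrite ltn_neqAle htp andbT; apply/eqP => e.
    by move: pk; rewrite -e (dvdn_mull _ (dvdnn p)).
  have tpp : p <= t * p by rewrite leq_pmull.
  have Pq := acdigit_per _ hd; have {Pq}Pq := Pq ltac:(lia).
  have := @Hdiv (k - t * p) ltac:(lia) Pq; move=> H; have := H ltac:(lia); clear H.
  move=> /(dvd_sub_aux htp) h; by rewrite h in pk.
Qed.
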